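(* Let $K$ be a field, $S=K[x_1,\ldots,x_n]$, and let $I=(x_{i_1}^2,\ldots,x_{i_k}^2,J)\subset S$ be a monomial ideal generated in degree $2$, where $i_1,\ldots,i_k$ are distinct and $J$ is the ideal generated by all squarefree monomials in $I$. Let $G$ be the graph on vertex set $[n]$ with $\{i,j\}$ ($i\ne j$) an edge iff $x_ix_j\in J$, and let $\overline{G}$ be its complementary graph. Suppose $I$ has a linear resolution, and let $\Delta$ be a quasi-tree whose $1$-skeleton is $\overline{G}$ (such a quasi-tree exists under this hypothesis). Then each $i_j$, $j=1,\ldots,k$, is a free vertex of $\Delta$, and no two of the vertices $i_1,\ldots,i_k$ belong to the same facet of $\Delta$.
   Context: The complementary graph $\overline{G}$ has vertex set $[n]$ and as edges exactly the pairs $\{i,j\}$, $i\ne j$, that are not edges of $G$. For a simplicial complex $\Delta$ with set of facets $\mathcal F(\Delta)$: a facet $F$ is a leaf if either $F$ is the only facet, or there is a facet $G'\ne F$ with $H\cap F\subseteq G'\cap F$ for every facet $H\neq F$. $\Delta$ is a quasi-tree if its facets can be labelled $F_1,\ldots,F_m$ so that for each $i$, $F_i$ is a leaf of the subcomplex $\langle F_1,\ldots,F_i\rangle$ generated by $F_1,\ldots,F_i$. A vertex is a free vertex of $\Delta$ if it belongs to exactly one facet. The $1$-skeleton of $\Delta$ is the graph of its vertices and $1$-dimensional faces. Linear resolution: minimal graded free resolution with $F_i\cong S(-2-i)^{\beta_i}$. *)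

(* Defs.v *)
From HB Require Import structures.
From mathcomp Require Import all_boot all_order all_algebra.
From mathcomp Require Import mpoly.
Set Implicit Arguments. Unset Strict Implicit. Unset Printing Implicit Defensive.
Import GRing.Theory.
Local Open Scope ring_scope.

(* Polynomial ring S = K[x_1..x_n] is {mpoly K[n]}, variables 'X_i,    *)
(* i : 'I_n  (so the vertex set [n] is 'I_n).                          *)

(* p is homogeneous of degree d (the zero polynomial counts as such). *)
Definition homog_of_deg (K : fieldType) (n d : nat) (p : {mpoly K[n]}) : bool :=
  all [pred m | mdeg m == d] (msupp p).

(* The monomial ideal I = (x_i^2 : i in A, x_i x_j : {i,j} edge of G),
   given as a membership predicate: p \in I iff p is an S-linear
   combination of the generators. *)
Definition gens_I (K : fieldType) (n : nat) (A : {set 'I_n}) (E : rel 'I_n)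
    : seq {mpoly K[n]} :=
  [seq 'X_i * 'X_i | i <- enum A] ++
  [seq 'X_(p.1) * 'X_(p.2) | p <- enum [pred p : 'I_n * 'I_n | E p.1 p.2]].

Definition ideal_gen (K : fieldType) (n : nat) (g : seq {mpoly K[n]})
    (p : {mpoly K[n]}) : Prop :=
  exists c : 'I_(size g) -> {mpoly K[n]}, p = \sum_(i < size g) c i * g`_i.

(* I (an ideal of S, given by membership) has a linear resolution:
   there is a graded free resolution
     ... -> F_2 -> F_1 -> F_0 -> I -> 0,   F_i = S(-2-i)^(b i),
   given by a row g : F_0 -> S (entries homogeneous of degree 2, image = I)
   and matrices d i : F_(i+1) -> F_i whose entries are homogeneous of
   degree 1 (the maps are degree-preserving), and the complex is exact.
   (Such a resolution is automatically minimal, hence this says the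
   minimal graded free resolution has the form F_i = S(-2-i)^(beta_i).) *)
Definition has_linear_resolution (K : fieldType) (n : nat)
    (I : {mpoly K[n]} -> Prop) : Prop :=
  exists (b : nat -> nat) (g : 'rV[{mpoly K[n]}]_(b 0%N))
         (d : forall i : nat, 'M[{mpoly K[n]}]_(b i, b i.+1)),
    [/\ (forall j, homog_of_deg 2 (g 0 j)),
        (forall i j k, homog_of_deg 1 (d i j k)),
        (forall p, I p <-> exists v : 'cV[{mpoly K[n]}]_(b 0%N), p = (g *m v) 0 0),
        (forall v : 'cV[{mpoly K[n]}]_(b 0%N),
            g *m v = 0 <-> exists w : 'cV_(b 1%N), v = d 0%N *m w) &
        (forall (i : nat) (v : 'cV[{mpoly K[n]}]_(b i.+1)),
            d i *m v = 0 <-> exists w : 'cV_(b i.+2), v = d i.+1 *m w)].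

(* Simplicial complexes on [n], given by their set of facets.          *)

Definition is_facet_set (n : nat) (F : {set {set 'I_n}}) : Prop :=
  forall A B, A \in F -> B \in F -> A \subset B -> A = B.

Definition is_leaf (n : nat) (Fs : seq {set 'I_n}) (F : {set 'I_n}) : Prop :=
  (forall H, H \in Fs -> H = F) \/
  exists2 G', (G' \in Fs) /\ G' != F &
    forall H, H \in Fs -> H != F -> H :&: F \subset G' :&: F.

Definition is_quasi_tree (n : nat) (F : {set {set 'I_n}}) : Prop :=
  is_facet_set F /\
  exists s : seq {set 'I_n},
    [/\ uniq s, (forall A, (A \in s) = (A \in F)) &
        forall i : nat, (i < size s)%N ->
          is_leaf (take i.+1 s) (nth set0 s i)].

Definition one_skeleton_is (n : nat) (F : {set {set 'I_n}}) (adj : rel 'I_n)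
    : Prop :=
  (forall v : 'I_n, exists2 A, A \in F & v \in A) /\
  (forall u v : 'I_n, u != v ->
     (adj u v <-> exists2 A, A \in F & (u \in A) && (v \in A))).

Definition free_vertex (n : nat) (F : {set {set 'I_n}}) (v : 'I_n) : Prop :=
  #|[set A in F | v \in A]| = 1%N.

(* Main.v *)
Require Import Defs.
From HB Require Import structures.
From mathcomp Require Import all_boot all_order all_algebra.
From mathcomp Require Import mpoly.
Set Implicit Arguments. Unset Strict Implicit. Unset Printing Implicit Defensive.
Import GRing.Theory.
Local Open Scope ring_scope.

Section Alg.
Variable (K : fieldType) (n : nat).
Implicit Types (p q : {mpoly K[n]}) (m mu : 'X_{1..n}).

Lemma le_mdeg_eq mu m : (mu <= m)%MM -> mdeg mu = mdeg m -> mu = m.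
Proof.
move=> le e; have := submK le; move: (m - mu)%MM => d Hd.
have : mdeg d = 0%N by move: e; rewrite -Hd mdegD => /eqP; rewrite -{1}(add0n (mdeg mu)) eqn_add2r => /eqP <-.
by move/eqP; rewrite mdeg_eq0 => /eqP dz; rewrite -Hd dz add0m.
Qed.

Lemma subm_id m : (m - m)%MM = 0%MM.
Proof. by rewrite -{1}[m]add0m addmK. Qed.

Lemma mcoeffMX_gen p mu m :
  (p * 'X_[mu])@_m = if (mu <= m)%MM then p@_(m - mu) else 0.
Proof.
case: ifP => le.
  by rewrite -{1}(submK le) addmC mcoeffMX.
apply/eqP; rewrite mcoeff_eq0 (perm_mem (msuppMX _ _)); apply/negP => /mapP [m' _ e].
by move: le; rewrite e lem_addr.
Qed.

Lemma mcoeffM_exp p q m : (p * q)@_m =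
  \sum_(mu <- msupp p) p@_mu * (if (mu <= m)%MM then q@_(m - mu) else 0).
Proof.
rewrite {1}(mpolyE p) mulr_suml raddf_sum; apply: eq_bigr => mu _.
by rewrite -scalerAl /= mcoeffZ (mulrC 'X_[mu]) mcoeffMX_gen.
Qed.

Lemma coef_supp p m : p@_m = \sum_(mu <- msupp p) p@_mu * (mu == m)%:R.
Proof.
rewrite {1}(mpolyE p) raddf_sum; apply: eq_bigr => mu _.
by rewrite /= mcoeffZ mcoeffX.
Qed.

Lemma homog_supp d p mu : homog_of_deg d p -> mu \in msupp p -> mdeg mu = d.
Proof. by move=> /allP H /H /= /eqP. Qed.

Lemma homog_mul_coef d p q m : homog_of_deg d p -> mdeg m = d ->
  (p * q)@_m = p@_m * q@_0.
Proof.
move=> hp dm; rewrite mcoeffM_exp coef_supp mulr_suml big_seq [RHS]big_seq.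
apply: eq_bigr => mu /(homog_supp hp) dmu.
case: ifP => le.
  by rewrite (le_mdeg_eq le) ?dm // eqxx mulr1 subm_id.
case: eqP => [e|_]; last by rewrite !mulr0 mul0r.
by move: le; rewrite e lepm_refl.
Qed.

Lemma mnm1_inj (i j : 'I_n) : (U_(i)%MM == U_(j)%MM :> 'X_{1..n})%MM = (i == j).
Proof.
apply/eqP/eqP => [e|->//]; move: (congr1 (fun m : 'X_{1..n} => m i) e).
by rewrite !mnm1E eqxx; case: eqP.
Qed.

Lemma lin_expand p (F : 'X_{1..n} -> K) : homog_of_deg 1 p ->
  \sum_(mu <- msupp p) p@_mu * F mu = \sum_(l < n) p@_(U_(l)%MM) * F (U_(l)%MM).
Proof.
move=> hp.
under [RHS]eq_bigr => l _ do rewrite coef_supp mulr_suml.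
rewrite exchange_big /= [RHS]big_seq [LHS]big_seq; apply: eq_bigr => mu /(homog_supp hp).
move/eqP/mdeg1P => [j /eqP ->].
rewrite [RHS](bigD1 j) //= eqxx mulr1 big1 ?addr0 // => l ne.
by rewrite mnm1_inj eq_sym (negbTE ne) mulr0 mul0r.
Qed.


Lemma mcoeffM_lin p q m : homog_of_deg 1 p -> (p * q)@_m =
  \sum_(l < n) p@_(U_(l)%MM) * (if (U_(l) <= m)%MM then q@_(m - U_(l)) else 0).
Proof.
move=> hp; rewrite mcoeffM_exp.
exact: (lin_expand (fun mu => if (mu <= m)%MM then q@_(m - mu) else 0) hp).
Qed.

Lemma sub_U (i l : 'I_n) : (U_(i) + U_(i) + U_(l) - U_(i))%MM = (U_(i) + U_(l))%MM.
Proof. by apply/mnmP => x; rewrite !mnmBE !mnmDE addnAC addnK. Qed.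

Lemma addU_K (x : 'X_{1..n}) (l : 'I_n) : (x + U_(l) - U_(l))%MM = x.
Proof. exact: addmK. Qed.

Lemma le_U_sum (i l l' : 'I_n) : (U_(l') <= U_(i) + U_(i) + U_(l))%MM -> l' != l -> l' = i.
Proof.
move/mnm_lepP/(_ l'); rewrite !mnmDE !mnm1E eqxx.
case: (i =P l') => [->//|_] le; rewrite eq_sym => /negbTE ne; by move: le; rewrite ne.
Qed.

Lemma le_U2 (l u v : 'I_n) : (U_(l) <= U_(u) + U_(v))%MM -> (l == u) || (l == v).
Proof.
move/mnm_lepP/(_ l); rewrite !mnmDE !mnm1E eqxx.
by rewrite ![_ == l]eq_sym; case: (l == u); case: (l == v).
Qed.

Lemma mdegUU (u v : 'I_n) : mdeg (U_(u) + U_(v))%MM = 2%N.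
Proof. by rewrite mdegD !mdeg1. Qed.

End Alg.

Section Ideal.
Variable (K : fieldType) (n : nat) (A : {set 'I_n}) (E : rel 'I_n).
Hypothesis (E_irr : irreflexive E) (E_sym : ssrbool.symmetric E).
Local Notation gens := (gens_I K A E).

Definition is_gen (mu : 'X_{1..n}) : Prop :=
  (exists2 p, p \in A & mu = (U_(p) + U_(p))%MM) \/
  (exists p q, E p q /\ mu = (U_(p) + U_(q))%MM).

Lemma gens_shape q : q \in gens -> exists2 mu, q = 'X_[mu] & is_gen mu.
Proof.
rewrite mem_cat => /orP [] /mapP [x hx ->].
  exists (U_(x) + U_(x))%MM; first by rewrite mpolyXD.
  by left; exists x => //; rewrite mem_enum in hx.
exists (U_(x.1) + U_(x.2))%MM; first by rewrite mpolyXD.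
by right; exists x.1, x.2; split => //; rewrite mem_enum in hx.
Qed.

Lemma gen_mem q : q \in gens -> ideal_gen gens q.
Proof.
move=> hq; exists (fun t => ((t : nat) == index q gens)%:R).
have hi : (index q gens < size gens)%N by rewrite index_mem.
rewrite (bigD1 (Ordinal hi)) //= eqxx mul1r nth_index // big1 ?addr0 //.
by move=> t ne; rewrite -val_eqE /= in ne; rewrite (negbTE ne) mul0r.
Qed.

Lemma ideal_coef0 p m : ideal_gen gens p -> mdeg m = 2%N ->
  (forall mu, is_gen mu -> mu <> m) -> p@_m = 0.
Proof.
move=> [c ->] dm hng; rewrite raddf_sum big1 // => t _.
have /gens_shape [mu e hmu] : gens`_t \in gens by rewrite mem_nth.
rewrite e /= mcoeffMX_gen; case: ifP => // le; exfalso; apply: (hng mu hmu).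
apply: le_mdeg_eq => //; rewrite dm.
by case: hmu => [[p' _ ->]|[p' [q' [_ ->]]]]; rewrite mdegUU.
Qed.

Lemma not_gen (i l : 'I_n) : i != l -> ~~ E i l -> forall mu, is_gen mu -> mu <> (U_(i) + U_(l))%MM.
Proof.
move=> nil nE mu [[p _ ->]|[p [q [hE ->]]]] e.
  move: (congr1 (fun m : 'X_{1..n} => m i) e).
  by rewrite !mnmDE !mnm1E eqxx [l == i]eq_sym (negbTE nil); case: (p == i).
have hpq : p != q by apply: contraTneq hE => ->; rewrite E_irr.
move: (congr1 (fun m : 'X_{1..n} => m p) e) (congr1 (fun m : 'X_{1..n} => m q) e).
rewrite !mnmDE !mnm1E !eqxx (negbTE hpq) eq_sym (negbTE hpq).
case: (i =P p) => [ip|nip]; case: (l =P p) => [lp|nlp] //=.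
- subst i; rewrite (negbTE hpq); case: (l =P q) => [lq|] //.
  by move: nE; rewrite lq hE.
- subst l; rewrite (negbTE hpq); case: (i =P q) => [iq|] //.
  by move: nE; rewrite iq E_sym hE.
Qed.


Lemma core (i : 'I_n) (m2 : 'X_{1..n}) :
  has_linear_resolution (ideal_gen gens) ->
  i \in A -> ideal_gen gens 'X_[m2] -> mdeg m2 = 2%N ->
  m2 <> (U_(i) + U_(i))%MM ->
  (forall l, (U_(l) <= m2)%MM -> (l == i) || ~~ E i l) -> False.
Proof.
move=> [b [g [d [hg hd hI hk0 _]]]] iA m2I dm2 m2ne hL.
have XiI : ideal_gen gens 'X_[U_(i) + U_(i)].
  rewrite mpolyXD; apply: gen_mem; rewrite mem_cat; apply/orP; left.
  by apply/mapP; exists i; rewrite ?mem_enum.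
have [a ha] := (hI _).1 XiI.
have [bb hb] := (hI _).1 m2I.
have gD c : \sum_k g 0 k * d 0%N k c = 0.
  have := (hk0 (col c (d 0%N))).2; rewrite colE => /(_ (ex_intro _ _ erefl)) /matrixP/(_ 0 0).
  rewrite !mxE => H; rewrite -[RHS]H; apply: eq_bigr => k _; by rewrite -colE mxE.
have gI k : ideal_gen gens (g 0 k).
  by apply/(hI _).2; exists (delta_mx k 0); rewrite -colE mxE.
set lam := fun k => (g 0 k)@_(U_(i) + U_(i)).
have F2 c l : (l == i) || ~~ E i l -> \sum_k lam k * (d 0%N k c)@_(U_(l)) = 0.
  move=> hl; have := congr1 (mcoeff (U_(i) + U_(i) + U_(l))) (gD c).
  rewrite raddf_sum mcoeff0 => H; rewrite -[RHS]H; apply: eq_bigr => k _.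
  rewrite /= (mulrC (g 0 k)). have := (mcoeffM_lin (g 0 k) (U_(i) + U_(i) + U_(l)) (hd 0%N k c)) => ->.
  rewrite (bigD1 l) // lem_addl addU_K big1 => [|l' /andP [_ ne]]; first by rewrite /= addr0 mulrC.
  case: ifP => [le|_]; last by rewrite mulr0.
  have e := le_U_sum le ne; rewrite e in ne *.
  rewrite sub_U (ideal_coef0 (gI k) (mdegUU _ _)) ?mulr0 //.
  by apply: not_gen => //; move: hl; rewrite eq_sym (negbTE ne).
have F1 : \sum_k lam k * (a k 0)@_0 = 1.
  have := congr1 (mcoeff (U_(i) + U_(i))) ha.
  rewrite mcoeffX eqxx mxE raddf_sum /= => H; rewrite [RHS]H; apply: eq_bigr => k _.
  by rewrite (homog_mul_coef _ (hg k)) ?mdegUU.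
pose v : 'cV[{mpoly K[n]}]_(b 0%N) :=
  \col_k ('X_[m2] * a k 0 - 'X_[U_(i) + U_(i)] * bb k 0).
have gv : g *m v = 0.
  apply/matrixP => x y; rewrite !ord1 !mxE.
  under eq_bigr => j _ do rewrite mxE mulrBr mulrCA [g 0 j * ('X_[_] * _)]mulrCA.
  rewrite sumrB -!mulr_sumr.
  move: ha hb; rewrite !mxE => <- <-.
  by rewrite mulrC subrr.
have [w hw] := (hk0 v).1 gv.
have e1 : \sum_k lam k * (v k 0)@_m2 = 1.
  rewrite -F1; apply: eq_bigr => k _.
  rewrite mxE mcoeffB (mulrC 'X_[m2]) (mulrC 'X_[_ + _]) !mcoeffMX_gen lepm_refl subm_id.
  case: ifP => [le|_]; last by rewrite subr0.
  by exfalso; apply: m2ne; symmetry; apply: le_mdeg_eq => //; rewrite dm2 mdegUU.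
have e0 : \sum_k lam k * (v k 0)@_m2 = 0.
  rewrite hw.
  under eq_bigr => k _ do rewrite mxE raddf_sum mulr_sumr.
  rewrite exchange_big; apply: big1 => c _.
  under eq_bigr => k _ do rewrite /= (mcoeffM_lin _ _ (hd 0%N k c)) mulr_sumr.
  rewrite exchange_big; apply: big1 => l _.
  case: (boolP (U_(l) <= m2)%MM) => le.
    under eq_bigr => k _ do rewrite mulrA.
    by rewrite -mulr_suml F2 ?mul0r // hL.
  by rewrite big1 // => k _; rewrite !mulr0.
by move: e1; rewrite e0 => /eqP; rewrite eq_sym oner_eq0.
Qed.

Lemma UU_ne (i u v : 'I_n) : u != i -> (U_(u) + U_(v))%MM <> (U_(i) + U_(i))%MM.
Proof.
move=> ui /(congr1 (fun m : 'X_{1..n} => m i)); rewrite !mnmDE !mnm1E eqxx (negbTE ui).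
by case: (v == i).
Qed.

Lemma PA (i j : 'I_n) : has_linear_resolution (ideal_gen gens) ->
  i \in A -> j \in A -> i != j -> E i j.
Proof.
move=> hlr iA jA ij; apply/negPn/negP => nE.
apply: (core hlr iA (m2 := (U_(j) + U_(j))%MM)).
- rewrite mpolyXD; apply: gen_mem; rewrite mem_cat; apply/orP; left.
  by apply/mapP; exists j; rewrite ?mem_enum.
- exact: mdegUU.
- by apply: UU_ne; rewrite eq_sym.
- by move=> l /le_U2; rewrite orbb => /eqP ->; rewrite nE orbT.
Qed.

Lemma PB (i u v : 'I_n) : has_linear_resolution (ideal_gen gens) ->
  i \in A -> u != i -> ~~ E i u -> ~~ E i v -> E u v -> False.
Proof.
move=> hlr iA ui nu nv huv.
apply: (core hlr iA (m2 := (U_(u) + U_(v))%MM)).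
- rewrite mpolyXD; apply: gen_mem; rewrite mem_cat; apply/orP; right.
  by apply/mapP; exists (u, v); rewrite ?mem_enum.
- exact: mdegUU.
- exact: UU_ne.
- by move=> l /le_U2 /orP [] /eqP ->; rewrite ?nu ?nv orbT.
Qed.

End Ideal.

Local Close Scope ring_scope.
Lemma flag_take (n : nat) (s : seq {set 'I_n}) (C : {set 'I_n}) x :
  (forall i : nat, (i < size s)%N -> is_leaf (take i.+1 s) (nth set0 s i)) ->
  x \in C -> forall k, (k <= size s)%N ->
  (forall u, u \in C -> exists2 B, B \in take k s & u \in B) ->
  (forall u v, u \in C -> v \in C -> u != v ->
     exists2 B, B \in take k s & (u \in B) && (v \in B)) ->
  exists2 B, B \in take k s & C \subset B.
Proof.
move=> hleaf xC; elim => [|k IH] hk hu huv.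
  by have [B] := hu x xC; rewrite take0 in_nil.
have ks : (k < size s)%N := hk.
have leaf := hleaf k ks; rewrite (take_nth set0 ks) in hu huv leaf *.
set Fk := nth set0 s k in hu huv leaf *.
have inH B : B \in rcons (take k s) Fk -> B != Fk -> B \in take k s.
  by rewrite mem_rcons in_cons => /orP [/eqP -> /eqP|//].
case: (boolP (C \subset Fk)) => [sub|].
  by exists Fk; rewrite // mem_rcons mem_head.
case/subsetPn => w wC wF.
case: leaf => [all|[G' [G'in G'ne] Hleaf]].
  by have [B Bin wB] := hu w wC; move: wB; rewrite (all B Bin) (negbTE wF).
have nFk (B : {set 'I_n}) : w \in B -> B != Fk by apply: contraTneq => ->.
have hu' u : u \in C -> exists2 B, B \in take k s & u \in B.
  move=> uC; case: (eqVneq u w) => [->|uw].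
    by have [B Bin wB] := hu w wC; exists B => //; apply: inH => //; apply: nFk.
  have [B Bin /andP [uB wB]] := huv u w uC wC uw.
  by exists B => //; apply: inH => //; apply: nFk.
have inG u : u \in C -> u \in Fk -> u \in G'.
  move=> uC uF; have uw : u != w by apply: contraTneq uF => ->.
  have [B Bin /andP [uB wB]] := huv u w uC wC uw.
  have /subsetP := Hleaf B Bin (nFk B wB).
  by move=> /(_ u); rewrite !inE uB uF /= => /(_ isT) /andP [].
have huv' u v : u \in C -> v \in C -> u != v ->
     exists2 B, B \in take k s & (u \in B) && (v \in B).
  move=> uC vC uv; have [B Bin /andP [uB vB]] := huv u v uC vC uv.
  case: (eqVneq B Fk) => [eB|ne]; last by exists B; rewrite ?uB ?vB //; apply: inH.
  exists G'; first exact: inH.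
  by rewrite (inG u uC) ?(inG v vC) // -eB.
have [B Bin sub] := IH (ltnW hk) hu' huv'.
by exists B; rewrite // mem_rcons in_cons Bin orbT.
Qed.

Theorem proposition2p5 (K : fieldType) (n : nat) (A : {set 'I_n})
    (E : rel 'I_n) (E_irr : irreflexive E) (E_sym : ssrbool.symmetric E)
    (F : {set {set 'I_n}}) :
  has_linear_resolution (ideal_gen (gens_I K A E)) ->
  is_quasi_tree F ->
  one_skeleton_is F (fun u v => (u != v) && ~~ E u v) ->
  (forall i, i \in A -> free_vertex F i) /\
  (forall i j, i \in A -> j \in A -> i != j ->
     forall B, B \in F -> ~ ((i \in B) && (j \in B))).
Proof.
move=> hlr [anti [s [us sF hl]]] [cover adj].
split; last first.
  move=> i j iA jA ij B BF /andP [iB jB].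
  have := (adj i j ij).2 (ex_intro2 _ _ B BF (introT andP (conj iB jB))).
  by rewrite /= ij (PA E_irr E_sym hlr iA jA ij).
move=> i iA.
pose C := [set u | ~~ E i u].
have iC : i \in C by rewrite inE E_irr.
have hu u : u \in C -> exists2 B, B \in take (size s) s & u \in B.
  by move=> _; have [B BF uB] := cover u; exists B; rewrite // take_size sF.
have huv u v : u \in C -> v \in C -> u != v ->
    exists2 B, B \in take (size s) s & (u \in B) && (v \in B).
  move=> uC vC uv; rewrite !inE in uC vC.
  have nE : ~~ E u v.
    case: (eqVneq u i) => [->//|ui]; case: (eqVneq v i) => [->|vi].
      by rewrite E_sym.
    by apply/negP => huv; apply: (PB E_irr E_sym hlr iA ui uC vC huv).
  have [B BF H] := (adj u v uv).1 (introT andP (conj uv nE)).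
  by exists B; rewrite // take_size sF.
have [F0 F0s CF0] := flag_take hl iC (leqnn (size s)) hu huv.
rewrite take_size sF in F0s.
rewrite /free_vertex (_ : [set B in F | i \in B] = [set F0]) ?cards1 //.
apply/setP => B; rewrite !inE; apply/andP/eqP => [[BF iB]|->]; last first.
  by rewrite F0s (subsetP CF0).
apply: anti => //; apply: subset_trans CF0; apply/subsetP => u uB.
rewrite inE; case: (eqVneq u i) => [->|ui]; first by rewrite E_irr.
have := (adj u i ui).2 (ex_intro2 _ _ B BF (introT andP (conj uB iB))).
by rewrite /= ui E_sym.
Qed.
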